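(* If $G$ is a $k$-gate, then $G\in$ Helly $[k,2,2]$. Furthermore, $G$ admits a Helly $(k,2,2)$-representation on a host tree that is a star.
   Context: All graphs are finite and simple. An $EPT$ representation of a graph $G$ is a pair $\langle \mathcal{P},T\rangle$ where $T$ is a tree and $\mathcal{P}=(P_v)_{v\in V(G)}$ is a family of subpaths of $T$ such that two distinct vertices $v,w$ are adjacent if and only if $E(P_v)\cap E(P_w)\neq\emptyset$. If $T$ has maximum degree $h$ this is an $(h,2,2)$-representation. It is Helly if $(E(P))_{P\in\mathcal{P}}$ has the Helly property (every pairwise intersecting subfamily has nonempty total intersection); Helly $[h,2,2]$ is the class of graphs admitting a Helly $(h,2,2)$-representation. A clique is a maximal complete set. Gates are defined recursively: (i) every chordless cycle $C_n$ with $n\geq 4$ is a gate; (ii) if $H$ is a gate, $C$ and $C'$ are disjoint cliques of $H$, and $P=(v_1,\dots,v_l)$ with $l\geq 2$ is a chordless path vertex-disjoint from $H$, then the union of $H$ and $P$ together with all edges between $v_1$ and the vertices of $C$ and all edges between $v_l$ and the vertices of $C'$ is a gate; (iii) there are no other gates. A $k$-gate is a gate with exactly $k$ cliques. A star is a graph $K_{1,n}$. *)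

(* Defs.v *)
(* Graphs have vertex labels in nat: a graph is a pair
   (V, E) with V : {fset nat} the (finite) vertex set and E : rel nat whose
   values only matter on V x V.  Host trees live on a finType. *)
From mathcomp Require Import all_boot all_order.
From mathcomp Require Import finmap.
Set Implicit Arguments. Unset Strict Implicit. Unset Printing Implicit Defensive.
Local Open Scope fset_scope.

Definition complete_set (V : {fset nat}) (E : rel nat) (C : {fset nat}) : Prop :=
  (forall x, x \in C -> x \in V) /\
  (forall x y, x \in C -> y \in C -> x != y -> E x y).

Definition is_clique (V : {fset nat}) (E : rel nat) (C : {fset nat}) : Prop :=
  complete_set V E C /\
  (forall D : {fset nat}, complete_set V E D ->
     (forall x, x \in C -> x \in D) -> D = C).

Definition num_cliques_eq (V : {fset nat}) (E : rel nat) (k : nat) : Prop :=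
  exists cs : seq {fset nat},
    uniq cs /\ size cs = k /\ (forall C, is_clique V E C <-> C \in cs).

Definition consec (s : seq nat) (x y : nat) : bool :=
  ((x, y) \in zip s (behead s)) || ((y, x) \in zip s (behead s)).

Definition cconsec (s : seq nat) (x y : nat) : bool :=
  ((x, y) \in zip s (rot 1 s)) || ((y, x) \in zip s (rot 1 s)).

Definition chordless_cycle (V : {fset nat}) (E : rel nat) : Prop :=
  exists s : seq nat,
    uniq s /\ 4 <= size s /\ (forall x, x \in V <-> x \in s) /\
    (forall x y, x \in V -> y \in V -> (E x y <-> cconsec s x y)).

Inductive gate : {fset nat} -> rel nat -> Prop :=
| gate_cycle V E : chordless_cycle V E -> gate V E
| gate_ext (V : {fset nat}) (E : rel nat) (C C' : {fset nat}) (p : seq nat)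
           (V' : {fset nat}) (E' : rel nat) :
    gate V E ->
    is_clique V E C -> is_clique V E C' ->
    (forall x, x \in C -> x \notin C') ->
    2 <= size p -> uniq p -> (forall x, x \in p -> x \notin V) ->
    (forall x, x \in V' <-> (x \in V \/ x \in p)) ->
    (forall x y, x \in V' -> y \in V' ->
       (E' x y <->
          [\/ (x \in V /\ y \in V /\ E x y),
              (x \in p /\ y \in p /\ consec p x y),
              (x = head 0 p /\ y \in C) \/ (y = head 0 p /\ x \in C) |
              (x = last 0 p /\ y \in C') \/ (y = last 0 p /\ x \in C')])) ->
    gate V' E'.

Definition kgate (k : nat) (V : {fset nat}) (E : rel nat) : Prop :=
  gate V E /\ num_cliques_eq V E k.

Definition acyclic (T : finType) (t : rel T) : Prop :=
  forall p : seq T, ~ (uniq p /\ 3 <= size p /\ cycle t p).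

Definition is_tree (T : finType) (t : rel T) : Prop :=
  symmetric t /\ irreflexive t /\ (forall x y, connect t x y) /\ acyclic t.

Definition degree (T : finType) (t : rel T) (x : T) : nat := #|[set y | t x y]|%N.

Definition max_degree (T : finType) (t : rel T) : nat := (\max_(x : T) degree t x)%N.

Definition is_star (T : finType) (t : rel T) : Prop :=
  exists c : T, forall x y, t x y <-> ((x = c /\ y <> c) \/ (y = c /\ x <> c)).

Definition is_subpath (T : finType) (t : rel T) (P : T * seq T) : Prop :=
  path t P.1 P.2 /\ uniq (P.1 :: P.2).

Definition path_edge (T : finType) (P : T * seq T) (a b : T) : bool :=
  ((a, b) \in zip (P.1 :: P.2) P.2) || ((b, a) \in zip (P.1 :: P.2) P.2).

Definition edges_meet (T : finType) (t : rel T) (P Q : T * seq T) : Prop :=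
  exists a b, t a b /\ path_edge P a b /\ path_edge Q a b.

Definition ept_rep (V : {fset nat}) (E : rel nat)
    (T : finType) (t : rel T) (P : nat -> T * seq T) : Prop :=
  is_tree t /\
  (forall v, v \in V -> is_subpath t (P v)) /\
  (forall u v, u \in V -> v \in V -> u != v -> (E u v <-> edges_meet t (P u) (P v))).

Definition helly_edges (V : {fset nat}) (T : finType) (t : rel T)
    (P : nat -> T * seq T) : Prop :=
  forall S : {fset nat}, (forall v, v \in S -> v \in V) -> S != fset0 ->
    (forall u v, u \in S -> v \in S -> edges_meet t (P u) (P v)) ->
    exists a b, t a b /\ (forall v, v \in S -> path_edge (P v) a b).

Definition helly_h22_rep (h : nat) (V : {fset nat}) (E : rel nat)
    (T : finType) (t : rel T) (P : nat -> T * seq T) : Prop :=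
  ept_rep V E t P /\ max_degree t = h /\ helly_edges V t P.

Definition in_helly_h22 (h : nat) (V : {fset nat}) (E : rel nat) : Prop :=
  exists (T : finType) (t : rel T) (P : nat -> T * seq T), helly_h22_rep h V E t P.

(* Main.v *)
Require Import Defs.
From mathcomp Require Import all_boot all_order.
From mathcomp Require Import finmap zify.
From Stdlib Require Import Classical.
Set Implicit Arguments. Unset Strict Implicit. Unset Printing Implicit Defensive.
Local Open Scope fset_scope.

Definition compl (E : rel nat) (A : {fset nat}) : Prop :=
  forall x y, x \in A -> y \in A -> x != y -> E x y.

Record nbhd2 (V : {fset nat}) (E : rel nat) (v : nat) (A B : {fset nat}) : Prop :=
  Nbhd2 {
    nbAV : forall x, x \in A -> x \in V;
    nbBV : forall x, x \in B -> x \in V;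
    nbvA : v \notin A;
    nbvB : v \notin B;
    nbdis : forall x, x \in A -> x \notin B;
    nbcA : compl E A;
    nbcB : compl E B;
    nbnad : forall a b, a \in A -> b \in B -> ~~ E a b;
    nbnb : forall x, x \in V -> x != v -> (E v x <-> (x \in A \/ x \in B)) }.

Definition symV (V : {fset nat}) (E : rel nat) :=
  forall x y, x \in V -> y \in V -> E x y -> E y x.

Definition Inv (V : {fset nat}) (E : rel nat) : Prop :=
  (exists v, v \in V) /\ symV V E /\
  (forall v, v \in V -> exists A B, nbhd2 V E v A B).

Lemma nbhd2_swap V E v A B : symV V E -> nbhd2 V E v A B -> nbhd2 V E v B A.
Proof.
move=> sy [h1 h2 h3 h4 h5 h6 h7 h8 h9]; split => //.
- by move=> x xB; apply/negP => xA; move: (h5 x xA); rewrite xB.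
- move=> a b aB bA; apply/negP => e.
  by move: (h8 b a bA aB); rewrite (sy a b (h2 _ aB) (h1 _ bA) e).
- by move=> x xV xv; rewrite h9 //; tauto.
Qed.

Lemma clique_split V E v A B K : symV V E -> nbhd2 V E v A B ->
  is_clique V E K -> v \in K -> K = v |` A \/ K = v |` B.
Proof.
move=> sy nb [[KV Kc] Km] vK.
have key : forall D, (forall x, x \in K -> x != v -> x \in D) ->
   compl E D -> (forall x, x \in D -> x \in V) -> v \notin D ->
   (forall x, x \in D -> E v x) -> K = v |` D.
  move=> D sub cD DV vD vE; symmetry; apply: Km.
  - split.
    + move=> x; rewrite !inE => /orP[/eqP->|]; [exact: KV | exact: DV].
    + move=> x y; rewrite !inE => /orP[/eqP->|xD] /orP[/eqP->|yD] ne.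
      * by rewrite eqxx in ne.
      * exact: vE.
      * by apply: sy; [exact: KV|exact: DV|exact: vE].
      * exact: cD.
  - move=> x xK; rewrite !inE; case: (eqVneq x v) => [->|ne] //=.
    exact: sub.
have nA : forall x, x \in K -> x != v -> x \in A \/ x \in B.
  move=> x xK ne; apply/(nbnb nb (KV _ xK) ne); apply: Kc => //; by rewrite eq_sym.
have [allA|] := classic (forall x, x \in K -> x != v -> x \in A).
  left; apply: key => //; [exact: nbcA nb|exact: nbAV nb|exact: nbvA nb|].
  move=> x xA; have xV := nbAV nb xA; apply/(nbnb nb xV) => //; last by left.
  by apply/eqP => exv; move: (nbvA nb); rewrite -exv xA.
move=> nall.
have [x [xK [xv xA]]] : exists x, x \in K /\ x != v /\ x \notin A.
  apply: NNPP => H; apply: nall => x xK xv; apply: NNPP => xA; apply: H.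
  by exists x; split=> //; split=> //; apply/negP.
have xB : x \in B by case: (nA x xK xv) => // xA'; rewrite xA' in xA.
right; apply: key => //; [|exact: nbcB nb|exact: nbBV nb|exact: nbvB nb|].
- move=> y yK yv; case: (nA y yK yv) => // yA.
  have yx : y != x by apply/eqP => e; rewrite -e yA in xA.
  by move: (nbnad nb yA xB); rewrite (Kc y x yK xK yx).
- move=> y yB; have yV := nbBV nb yB; apply/(nbnb nb yV) => //; last by right.
  by apply/eqP => exv; move: (nbvB nb); rewrite -exv yB.
Qed.

Lemma extend_clique V E D : complete_set V E D ->
  exists K, is_clique V E K /\ (forall x, x \in D -> x \in K).
Proof.
move=> cD.
suff: forall n D, complete_set V E D -> #|` V| - #|` D| <= n ->
  exists K, is_clique V E K /\ (forall x, x \in D -> x \in K) by move/(_ _ D cD); apply.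
elim=> [|n IH] D0 c0 hn.
  exists D0; split=> //; split=> // D1 c1 sub.
  apply/eqP; rewrite eqEfsubset; apply/andP; split; last by apply/fsubsetP.
  have s1 : D1 `<=` V by apply/fsubsetP => x; apply: c1.1.
  have s0 : D0 `<=` D1 by apply/fsubsetP.
  apply: contraLR hn => ns; rewrite -ltnNge subn_gt0.
  apply: (@leq_trans #|` D1|); last exact: fsubset_leq_card.
  apply: fproper_ltn_card; by rewrite fproperE s0.
have [mx|nmx] := classic (forall D1, complete_set V E D1 ->
                    (forall x, x \in D0 -> x \in D1) -> D1 = D0).
  by exists D0; split.
have [D1 [c1 [s01 ne]]] : exists D1, complete_set V E D1 /\
   (forall x, x \in D0 -> x \in D1) /\ D1 <> D0.
  apply: NNPP => H; apply: nmx => D1 c1 s; apply: NNPP => ne; apply: H.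
  by exists D1.
have [K [cK sK]] : exists K, is_clique V E K /\ (forall x, x \in D1 -> x \in K).
  apply: IH => //.
  have s1 : D1 `<=` V by apply/fsubsetP => x; apply: c1.1.
  have s0 : D0 `<` D1.
    rewrite fproperEneq; apply/andP; split; last by apply/fsubsetP.
    by apply/eqP => e; apply: ne.
  have := fproper_ltn_card s0; have := fsubset_leq_card s1; lia.
by exists K; split=> // x /s01 /sK.
Qed.


Lemma zip_behead_nth (s : seq nat) x y : (x, y) \in zip s (behead s) <->
  exists i, i.+1 < size s /\ nth 0 s i = x /\ nth 0 s i.+1 = y.
Proof.
have sz : size (zip s (behead s)) = (size s).-1.
  rewrite size_zip size_behead; lia.
split.
- case/(nthP (0,0)) => i; rewrite sz => hi; rewrite nth_zip_cond ifT; last by rewrite sz.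
  rewrite /= nth_behead => -[<- <-]; exists i; split=> //; lia.
- case=> i [hi [<- <-]]; apply/(nthP (0,0)); exists i; first by rewrite sz; lia.
  by rewrite nth_zip_cond ifT /= ?nth_behead // sz; lia.
Qed.

Lemma nth_inj0 (p : seq nat) i j : uniq p -> i < size p -> j < size p ->
  nth 0 p i = nth 0 p j -> i = j.
Proof. by move=> up hi hj /eqP; rewrite nth_uniq // => /eqP. Qed.

Lemma consec_idx (p : seq nat) i j : uniq p -> i < size p -> j < size p ->
  consec p (nth 0 p i) (nth 0 p j) = (j == i.+1) || (i == j.+1).
Proof.
move=> up hi hj; rewrite /consec.
have E1 : forall a b, a < size p -> b < size p ->
   ((nth 0 p a, nth 0 p b) \in zip p (behead p)) = (b == a.+1).
  move=> a b ha hb; apply/idP/idP.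
  - case/zip_behead_nth => m [hm [e1 e2]].
    have := nth_inj0 up (_ : m < size p) ha e1.
    have := nth_inj0 up (_ : m.+1 < size p) hb e2.
    move=> h1 h2; apply/eqP; lia.
  - move/eqP => eb; apply/zip_behead_nth; exists a; split; first lia.
    by rewrite eb.
by rewrite !E1.
Qed.

Definition csucc n i := if i == n.-1 then 0 else i.+1.

Lemma zip_rot_nth (s : seq nat) x y : (x, y) \in zip s (rot 1 s) <->
  exists i, i < size s /\ nth 0 s i = x /\ nth 0 s (csucc (size s) i) = y.
Proof.
case: s => [|a s'].
  by split => //; case=> i [].
have sz : size (zip (a :: s') (rot 1 (a :: s'))) = (size s').+1.
  by rewrite size_zip size_rot minnn.
have nr : forall i, i < (size s').+1 -> nth 0 (rot 1 (a :: s')) i =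
    nth 0 (a :: s') (csucc (size s').+1 i).
  move=> i hi; rewrite rot1_cons nth_rcons /csucc /=.
  case: ltnP => h1.
    by rewrite ifF //; apply/negbTE; rewrite neq_ltn h1.
  have ei : i = size s' by lia.
  by rewrite ei eqxx.
split.
- case/(nthP (0,0)) => i; rewrite sz => hi; rewrite nth_zip ?size_rot //.
  case=> <- <-; exists i; split=> //; split=> //; by rewrite nr.
- case=> i [hi [<- <-]]; apply/(nthP (0,0)); exists i; rewrite ?sz //.
  by rewrite nth_zip ?size_rot // nr.
Qed.

Lemma cconsec_idx (s : seq nat) i j : uniq s -> i < size s -> j < size s ->
  cconsec s (nth 0 s i) (nth 0 s j) =
  (j == csucc (size s) i) || (i == csucc (size s) j).
Proof.
move=> us hi hj; rewrite /cconsec.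
have cs : forall a, a < size s -> csucc (size s) a < size s.
  by move=> a ha; rewrite /csucc; case: eqP; lia.
have E1 : forall a b, a < size s -> b < size s ->
   ((nth 0 s a, nth 0 s b) \in zip s (rot 1 s)) = (b == csucc (size s) a).
  move=> a b ha hb; apply/idP/idP.
  - case/zip_rot_nth => m [hm [e1 e2]].
    have h1 := nth_inj0 us hm ha e1.
    have h2 := nth_inj0 us (cs _ hm) hb e2.
    by apply/eqP; rewrite -h2 h1.
  - move/eqP => eb; apply/zip_rot_nth; exists a; split=> //.
    by rewrite eb.
by rewrite !E1.
Qed.


Definition cpred n i := if i == 0 then n.-1 else i.-1.

Ltac arith := rewrite /csucc /cpred; repeat (case: ifP => /eqP); lia.

Lemma cs_lt n i : i < n -> csucc n i < n. Proof. arith. Qed.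
Lemma cp_lt n i : i < n -> cpred n i < n. Proof. arith. Qed.
Lemma cs_eq n i j : i < n -> j < n -> (i == csucc n j) = (j == cpred n i).
Proof. move=> hi hj; apply/eqP/eqP; arith. Qed.
Lemma cs_ne n i : 2 <= n -> i < n -> csucc n i != i. Proof. move=> h1 h2; apply/eqP; arith. Qed.
Lemma cp_ne n i : 2 <= n -> i < n -> cpred n i != i. Proof. move=> h1 h2; apply/eqP; arith. Qed.
Lemma cpcs_ne n i : 3 <= n -> i < n -> cpred n i != csucc n i.
Proof. move=> h1 h2; apply/eqP; arith. Qed.
Lemma cscp n i : i < n -> csucc n (cpred n i) = i. Proof. arith. Qed.
Lemma cscs_ne n i : 4 <= n -> i < n -> cpred n i != csucc n (csucc n i).
Proof. move=> h1 h2; apply/eqP; arith. Qed.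

Lemma cycle_inv V E : chordless_cycle V E -> Inv V E.
Proof.
case=> s [us [hs [Vs Es]]].
set n := size s in hs.
have nthV : forall i, i < n -> nth 0 s i \in V by move=> i hi; apply/Vs/mem_nth.
have Vidx : forall x, x \in V -> exists2 i, i < n & nth 0 s i = x.
  by move=> x /Vs /(nthP 0).
split; first by exists (nth 0 s 0); apply: nthV; lia.
split.
  move=> x y xV yV /(Es x y xV yV) c; apply/(Es y x yV xV).
  by rewrite /cconsec orbC.
move=> v /Vidx [i hi <-].
exists [fset nth 0 s (cpred n i)], [fset nth 0 s (csucc n i)].
have hp := cp_lt hi; have hsu := cs_lt hi.
have inj := nth_inj0 us.
have n2 : 2 <= n by lia.
have n3 : 3 <= n by lia.
split.
- by move=> x; rewrite inE => /eqP ->; apply: nthV.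
- by move=> x; rewrite inE => /eqP ->; apply: nthV.
- rewrite inE; apply/eqP => /(inj _ _ hi hp) e.
  by move: (cp_ne n2 hi); rewrite -e eqxx.
- rewrite inE; apply/eqP => /(inj _ _ hi hsu) e.
  by move: (cs_ne n2 hi); rewrite -e eqxx.
- move=> x; rewrite !inE => /eqP -> ; apply/eqP => /(inj _ _ hp hsu) e.
  by move: (cpcs_ne n3 hi); rewrite e eqxx.
- by move=> x y; rewrite !inE => /eqP -> /eqP ->; rewrite eqxx.
- by move=> x y; rewrite !inE => /eqP -> /eqP ->; rewrite eqxx.
- move=> a b; rewrite !inE => /eqP -> /eqP ->; apply/negP.
  move/(Es _ _ (nthV _ hp) (nthV _ hsu)); rewrite cconsec_idx // -/n.
  by rewrite cscp // (negbTE (cs_ne n2 hi)) (negbTE (cscs_ne hs hi)).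
- move=> x /Vidx [j hj <-] ne.
  rewrite (Es _ _ (nthV _ hi) (nthV _ hj)) cconsec_idx // -/n !inE.
  rewrite (cs_eq hi hj).
  have e1 : (nth 0 s j == nth 0 s (cpred n i)) = (j == cpred n i) by rewrite nth_uniq.
  have e2 : (nth 0 s j == nth 0 s (csucc n i)) = (j == csucc n i) by rewrite nth_uniq.
  rewrite e1 e2; split; [case/orP; tauto | case=> ->; by rewrite ?orbT].
Qed.


Lemma step_none (V : {fset nat}) (E : rel nat) (V' : {fset nat}) (E' : rel nat) v A B :
  v \in V -> nbhd2 V E v A B -> (forall x, x \in V -> x \in V') ->
  (forall a b, a \in V -> b \in V -> (E' a b <-> E a b)) ->
  (forall y, y \in V' -> y \notin V -> ~ E' v y) ->
  nbhd2 V' E' v A B.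
Proof.
move=> vV nb VV' F1 nv; split.
- by move=> x /(nbAV nb) /VV'.
- by move=> x /(nbBV nb) /VV'.
- exact: nbvA nb.
- exact: nbvB nb.
- exact: nbdis nb.
- move=> x y xA yA ne; apply/(F1 _ _ (nbAV nb xA) (nbAV nb yA)); exact: (nbcA nb xA yA ne).
- move=> x y xA yA ne; apply/(F1 _ _ (nbBV nb xA) (nbBV nb yA)); exact: (nbcB nb xA yA ne).
- move=> a b aA bB; apply/negP => /(F1 _ _ (nbAV nb aA) (nbBV nb bB)) e.
  by move: (nbnad nb aA bB); rewrite e.
- move=> x xV' ne; case xV: (x \in V).
    by move: (nbnb nb xV ne) (F1 _ _ vV xV); tauto.
  split=> [e|[xA|xB]]; first by case: (nv x xV'); rewrite ?xV.
  + by move: (nbAV nb xA); rewrite xV.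
  + by move: (nbBV nb xB); rewrite xV.
Qed.

Lemma step_K (V : {fset nat}) (E : rel nat) (V' : {fset nat}) (E' : rel nat) v A B K h :
  symV V E -> nbhd2 V E v A B -> is_clique V E K -> v \in K ->
  (forall x, x \in V -> x \in V') -> h \in V' -> h \notin V ->
  (forall a b, a \in V -> b \in V -> (E' a b <-> E a b)) ->
  (forall b, b \in V -> (E' b h <-> b \in K)) ->
  (forall b, b \in V -> (E' h b <-> b \in K)) ->
  (forall y, y \in V' -> y \notin V -> (E' v y <-> y = h)) ->
  exists A' B', nbhd2 V' E' v A' B'.
Proof.
move=> sy nb0 cK vK VV' hV' hV F1 Fb Fh Fv.
have vV : v \in V by case: cK => [[KV _] _]; apply: KV.
suff main : forall A B, nbhd2 V E v A B -> K = v |` A ->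
    exists A' B', nbhd2 V' E' v A' B'.
  case: (clique_split sy nb0 cK vK) => eK.
    exact: main nb0 eK.
  exact: main (nbhd2_swap sy nb0) eK.
move=> {nb0} A0 B0 nb eK.
have AK : forall a, a \in A0 -> a \in K by move=> a aA; rewrite eK !inE aA orbT.
have hv : h != v by apply/eqP => e; move: hV; rewrite e vV.
have hA : h \notin A0 by apply/negP => /(nbAV nb); apply/negP.
have hB : h \notin B0 by apply/negP => /(nbBV nb); apply/negP.
exists (h |` A0), B0; split.
- move=> x; rewrite !inE => /orP[/eqP->|/(nbAV nb)/VV'] //.
- by move=> x /(nbBV nb) /VV'.
- by rewrite !inE eq_sym (negbTE hv) (negbTE (nbvA nb)).
- exact: nbvB nb.
- by move=> x; rewrite !inE => /orP[/eqP->|/(nbdis nb)].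
- move=> x y; rewrite !inE => /orP[/eqP->|xA] /orP[/eqP->|yA] ne.
  + by rewrite eqxx in ne.
  + by apply/(Fh _ (nbAV nb yA)); exact: AK.
  + by apply/(Fb _ (nbAV nb xA)); exact: AK.
  + by apply/(F1 _ _ (nbAV nb xA) (nbAV nb yA)); exact: (nbcA nb xA yA ne).
- move=> x y xA yA ne; apply/(F1 _ _ (nbBV nb xA) (nbBV nb yA)); exact: (nbcB nb xA yA ne).
- move=> a b; rewrite !inE => /orP[/eqP->|aA] bB.
  + apply/negP => /(Fh _ (nbBV nb bB)); rewrite eK !inE => /orP[/eqP e|bA].
      by move: (nbvB nb); rewrite -e bB.
    by move: (nbdis nb bA); rewrite bB.
  + apply/negP => /(F1 _ _ (nbAV nb aA) (nbBV nb bB)) e.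
    by move: (nbnad nb aA bB); rewrite e.
- move=> x xV' ne; rewrite !inE; case xV: (x \in V).
    rewrite F1 // (nbnb nb) //.
    have -> : (x == h) = false by apply/negbTE; apply/eqP => e; move: hV; rewrite -e xV.
    by [].
  rewrite Fv ?xV //.
  have -> : (x \in A0) = false by apply/negbTE/negP => /(nbAV nb); rewrite xV.
  have -> : (x \in B0) = false by apply/negbTE/negP => /(nbBV nb); rewrite xV.
  by rewrite orbF; split => [->|[/eqP//|//]]; left.
Qed.

Lemma ext_inv (V : {fset nat}) (E : rel nat) (C C' : {fset nat}) (p : seq nat)
           (V' : {fset nat}) (E' : rel nat) :
    Inv V E ->
    is_clique V E C -> is_clique V E C' ->
    (forall x, x \in C -> x \notin C') ->
    2 <= size p -> uniq p -> (forall x, x \in p -> x \notin V) ->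
    (forall x, x \in V' <-> (x \in V \/ x \in p)) ->
    (forall x y, x \in V' -> y \in V' ->
       (E' x y <->
          [\/ (x \in V /\ y \in V /\ E x y),
              (x \in p /\ y \in p /\ consec p x y),
              (x = head 0 p /\ y \in C) \/ (y = head 0 p /\ x \in C) |
              (x = last 0 p /\ y \in C') \/ (y = last 0 p /\ x \in C')])) ->
    Inv V' E'.
Proof.
move=> [[v0 v0V] [sy nbs]] cC cC' dCC' hp up pV V'e Ee.
set n := size p in hp.
have CV : forall x, x \in C -> x \in V by case: cC => [[CV _] _].
have C'V : forall x, x \in C' -> x \in V by case: cC' => [[CV0 _] _].
have VV' : forall x, x \in V -> x \in V' by move=> x xV; apply/V'e; left.
have pV' : forall x, x \in p -> x \in V' by move=> x xp; apply/V'e; right.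
have Vp : forall x, x \in V -> x \in p -> False.
  by move=> x xV /pV; rewrite xV.
have nthp : forall i, i < n -> nth 0 p i \in p by move=> i hi; apply: mem_nth.
have inj := nth_inj0 up.
have h0e : head 0 p = nth 0 p 0 by case: (p).
have hle : last 0 p = nth 0 p n.-1 by rewrite nth_last.
set h0 := head 0 p in Ee h0e; set hl := last 0 p in Ee hle.
have h0p : h0 \in p by rewrite h0e nthp //; lia.
have hlp : hl \in p by rewrite hle nthp //; lia.
have h0hl : h0 <> hl.
  by rewrite h0e hle => /inj; move=> H; have := H (ltac:(lia)) (ltac:(lia)); lia.
have F1 : forall a b, a \in V -> b \in V -> (E' a b <-> E a b).
  move=> a b aV bV; apply: iff_trans (Ee a b (VV' _ aV) (VV' _ bV)) _.
  split; last by move=> e; apply: Or41.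
  case=> [[_ [_ e]] // | [ap _] | [[ae _]|[be _]] | [[ae _]|[be _]]].
  - by case: (Vp a).
  - by case: (Vp a) => //; rewrite ae.
  - by case: (Vp b) => //; rewrite be.
  - by case: (Vp a) => //; rewrite ae.
  - by case: (Vp b) => //; rewrite be.
have F2 : forall x y, x \in V -> y \in p ->
    (E' x y <-> (y = h0 /\ x \in C) \/ (y = hl /\ x \in C')).
  move=> x y xV yp; apply: iff_trans (Ee x y (VV' _ xV) (pV' _ yp)) _.
  split.
  - case=> [[_ [yV _]] | [xp _] | [[xe _]|[ye xC]] | [[xe _]|[ye xC]]].
    + by case: (Vp y).
    + by case: (Vp x).
    + by case: (Vp x) => //; rewrite xe.
    + by left.
    + by case: (Vp x) => //; rewrite xe.
    + by right.
  - by case=> [[ye xC]|[ye xC]]; [apply: Or43; right | apply: Or44; right].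
have F3 : forall x y, x \in V -> y \in p ->
    (E' y x <-> (y = h0 /\ x \in C) \/ (y = hl /\ x \in C')).
  move=> x y xV yp; apply: iff_trans (Ee y x (pV' _ yp) (VV' _ xV)) _.
  split.
  - case=> [[yV _] | [_ [xp _]] | [[ye xC]|[xe _]] | [[ye xC]|[xe _]]].
    + by case: (Vp y).
    + by case: (Vp x).
    + by left.
    + by case: (Vp x) => //; rewrite xe.
    + by right.
    + by case: (Vp x) => //; rewrite xe.
  - by case=> [[ye xC]|[ye xC]]; [apply: Or43; left | apply: Or44; left].
have F4 : forall x y, x \in p -> y \in p -> (E' x y <-> consec p x y).
  move=> x y xp yp; apply: iff_trans (Ee x y (pV' _ xp) (pV' _ yp)) _.
  split; last by move=> c; apply: Or42.
  case=> [[xV _] | [_ [_ c]] // | [[_ yC]|[_ xC]] | [[_ yC]|[_ xC]]].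
  - by case: (Vp x).
  - by case: (Vp y) => //; apply: CV.
  - by case: (Vp x) => //; apply: CV.
  - by case: (Vp y) => //; apply: C'V.
  - by case: (Vp x) => //; apply: C'V.
split; first by exists v0; apply: VV'.
split.
  move=> x y /V'e [xV|xp] /V'e [yV|yp].
  - by move/(F1 _ _ xV yV) => e; apply/(F1 _ _ yV xV); apply: sy.
  - by move/(F2 _ _ xV yp) => e; apply/(F3 _ _ xV yp).
  - by move/(F3 _ _ yV xp) => e; apply/(F2 _ _ yV xp).
  - by move/(F4 _ _ xp yp) => e; apply/(F4 _ _ yp xp); rewrite /consec orbC.
move=> v /V'e [vV|vp].
  have [A [B nb]] := nbs v vV.
  case vC: (v \in C).
    apply: (step_K sy nb cC vC VV' (pV' _ h0p) (pV _ h0p) F1).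
    - move=> b bV; apply: iff_trans (F2 _ _ bV h0p) _; split; last by left.
      by case=> [[_ ?]|[e _]].
    - move=> b bV; apply: iff_trans (F3 _ _ bV h0p) _; split; last by left.
      by case=> [[_ ?]|[e _]].
    - move=> y /V'e [yV|yp] nyV; first by rewrite yV in nyV.
      apply: iff_trans (F2 _ _ vV yp) _; split; last by move=> ->; left.
      by case=> [[? _]|[_ vC']] //; move: (dCC' _ vC); rewrite vC'.
  case vC': (v \in C').
    apply: (step_K sy nb cC' vC' VV' (pV' _ hlp) (pV _ hlp) F1).
    - move=> b bV; apply: iff_trans (F2 _ _ bV hlp) _; split; last by right.
      by case=> [[e _]|[_ ?]] //; case: h0hl.
    - move=> b bV; apply: iff_trans (F3 _ _ bV hlp) _; split; last by right.
      by case=> [[e _]|[_ ?]] //; case: h0hl.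
    - move=> y /V'e [yV|yp] nyV; first by rewrite yV in nyV.
      apply: iff_trans (F2 _ _ vV yp) _; split; last by move=> ->; right.
      by case=> [[_ vC0]|[-> _]] //; rewrite vC0 in vC.
  exists A, B; apply: (step_none vV nb VV' F1).
  move=> y /V'e [yV|yp] nyV; first by rewrite yV in nyV.
  by move/(F2 _ _ vV yp); rewrite vC vC'; case=> [[_ ?]|[_ ?]].
have [i hi vi] : exists2 i, i < n & nth 0 p i = v by apply/(nthP 0).
set pr := nth 0 p i.-1; set nx := nth 0 p i.+1.
have nthe : forall a b, a < n -> b < n -> (nth 0 p a = nth 0 p b <-> a = b).
  by move=> a b ha hb; split => [/inj|->] //; apply.
exists (if i == 0 then C else [fset pr]), (if i == n.-1 then C' else [fset nx]).
have memA : forall x, x \in (if i == 0 then C else [fset pr]) <->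
   (i = 0 /\ x \in C) \/ (i <> 0 /\ x = pr).
  move=> x; case: eqP => [->|ne]; first by split; [left|case=> [[]|[]]].
  by rewrite inE; split; [move/eqP; right|case=> [[]|[_ /eqP]]].
have memB : forall x, x \in (if i == n.-1 then C' else [fset nx]) <->
   (i = n.-1 /\ x \in C') \/ (i <> n.-1 /\ x = nx).
  move=> x; case: eqP => [->|ne]; first by split; [left|case=> [[]|[]]].
  by rewrite inE; split; [move/eqP; right|case=> [[]|[_ /eqP]]].
have prp : i <> 0 -> pr \in p by move=> ne; apply: nthp; lia.
have nxp : i <> n.-1 -> nx \in p by move=> ne; apply: nthp; lia.
have v_h0 : v = h0 <-> i = 0 by rewrite -vi h0e nthe //; lia.
have v_hl : v = hl <-> i = n.-1 by rewrite -vi hle nthe //; lia.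
split.
- move=> x /memA [[_ /CV /VV'] | [ne ->]] //; exact: pV' (prp ne).
- move=> x /memB [[_ /C'V /VV'] | [ne ->]] //; exact: pV' (nxp ne).
- apply/negP => /memA [[_ /CV vV]|[ne e]]; first by case: (Vp v).
  by move: e; rewrite -vi nthe //; lia.
- apply/negP => /memB [[_ /C'V vV]|[ne e]]; first by case: (Vp v).
  by move: e; rewrite -vi nthe //; lia.
- move=> x /memA [[i0 xC]|[ne ->]]; apply/negP => /memB [[i1 xC']|[ne' e]].
  + by move: (dCC' _ xC); rewrite xC'.
  + by case: (Vp x); [apply: CV | rewrite e; apply: nxp].
  + by case: (Vp pr); [apply: C'V | apply: prp].
  + by move: e; rewrite nthe //; lia.
- move=> x y /memA [[i0 xC]|[i0 ->]] /memA [[i1 yC]|[i1 ->]] ne.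
  + by apply/(F1 _ _ (CV _ xC) (CV _ yC)); case: cC => [[_ cc] _]; apply: cc.
  + lia.
  + lia.
  + by rewrite eqxx in ne.
- move=> x y /memB [[i0 xC]|[i0 ->]] /memB [[i1 yC]|[i1 ->]] ne.
  + by apply/(F1 _ _ (C'V _ xC) (C'V _ yC)); case: cC' => [[_ cc] _]; apply: cc.
  + lia.
  + lia.
  + by rewrite eqxx in ne.
- move=> a b /memA [[i0 aC]|[ne ->]] /memB [[i1 bC']|[ne' ->]]; apply/negP.
  + lia.
  + move/(F2 _ _ (CV _ aC) (nxp ne')) => [[e _]|[_ aC']].
    * by move: e; rewrite h0e nthe //; lia.
    * by move: (dCC' _ aC); rewrite aC'.
  + move/(F3 _ _ (C'V _ bC') (prp ne)) => [[_ bC]|[e _]].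
    * by move: (dCC' _ bC); rewrite bC'.
    * by move: e; rewrite hle nthe //; lia.
  + move/(F4 _ _ (prp ne) (nxp ne')); rewrite /pr /nx consec_idx //; try lia.
- move=> x /V'e [xV|xp] ne.
  + apply: iff_trans (F3 _ _ xV vp) _; rewrite memA memB v_h0 v_hl.
    split.
    * by case=> [[]|[]]; auto.
    * case=> [[H|[ne' e]]|[H|[ne' e]]]; [by left| |by right|].
      - by case: (Vp x); rewrite // e; apply: prp.
      - by case: (Vp x); rewrite // e; apply: nxp.
  + have [j hj xj] : exists2 j, j < n & nth 0 p j = x by apply/(nthP 0).
    apply: iff_trans (F4 _ _ vp xp) _; rewrite memA memB -vi -xj consec_idx //.
    have xV : x \notin V by apply: pV.
    split.
    * case/orP => /eqP e.
      - right; right; split; first lia.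
        by rewrite /nx e.
      - left; right; split; first lia.
        by rewrite /pr e.
    * case=> [[[_ xC]|[ne0 e]]|[[_ xC]|[ne0 e]]].
      - by move: xV; rewrite -xj (CV _ xC).
      - by move: e; rewrite /pr nthe; lia.
      - by move: xV; rewrite -xj (C'V _ xC).
      - by move: e; rewrite /nx nthe; lia.
Qed.


Lemma gate_inv V E : gate V E -> Inv V E.
Proof.
elim=> [V0 E0 /cycle_inv // | V0 E0 C C' p V' E' _ IH cC cC' d hp up pV V'e Ee].
exact: ext_inv IH cC cC' d hp up pV V'e Ee.
Qed.

Section Star.
Variable k : nat.
Definition sT := 'I_k.+1.
Definition sc : sT := ord0.
Definition leaf (i : nat) : sT := inord i.+1.
Definition st : rel sT := fun x y => ((x == sc) && (y != sc)) || ((y == sc) && (x != sc)).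

Lemma leaf_ne i : i < k -> (leaf i == sc) = false.
Proof. by move=> hi; apply/negbTE; apply/eqP => /(congr1 val); rewrite /= inordK. Qed.

Lemma leaf_inj i j : i < k -> j < k -> leaf i = leaf j -> i = j.
Proof. by move=> hi hj /(congr1 val); rewrite /= !inordK //; case. Qed.

Lemma st_tc x y : st x y -> x = sc \/ y = sc.
Proof. by case/orP => /andP[/eqP -> _]; auto. Qed.

Lemma st_leaf i : i < k -> st sc (leaf i) /\ st (leaf i) sc.
Proof. by move=> hi; rewrite /st leaf_ne // eqxx. Qed.

Lemma st_tree : is_tree st.
Proof.
split; first by move=> x y; rewrite /st orbC.
split; first by move=> x; rewrite /st andbN.
split.
  have toc : forall x, connect st x sc.
    move=> x; case: (eqVneq x sc) => [->|ne]; first exact: connect0.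
    by apply: connect1; rewrite /st ne eqxx orbT.
  move=> x y; apply: connect_trans (toc x) _.
  case: (eqVneq y sc) => [->|ne]; first exact: connect0.
  by apply: connect1; rewrite /st ne eqxx.
case=> [|a [|b [|d r]]] [u [hs cy]] //.
move: cy; rewrite /cycle /= => /and3P[tab tbd pr].
have ub : b != a /\ d != b /\ d != a.
  move: u; rewrite /= !inE => /and4P[/norP[ab /norP[ad _]] /norP[bd _] _ _].
  by rewrite !(eq_sym _ a) (eq_sym d b).
case: ub => [ba [db da]].
case: (eqVneq b sc) => [eb|nb].
  have nd : d != sc by rewrite -eb.
  set e := head a r.
  have tde : st d e.
    by rewrite /e; move: pr; case: (r) => [|x r'] /= /andP[].
  have ne : e != sc.
    rewrite /e; move: u; case: (r) => [|x r'] /=.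
      by move=> _; rewrite -eb eq_sym.
    rewrite !inE => /and4P[_ /norP[_ /norP[xb _]] _ _].
    by rewrite -eb eq_sym.
  by case: (st_tc tde) => e'; [rewrite e' eqxx in nd | rewrite e' eqxx in ne].
have ea : a = sc by case: (st_tc tab) => // e; rewrite e eqxx in nb.
have ed : d = sc by case: (st_tc tbd) => // e; rewrite e eqxx in nb.
by rewrite ea ed eqxx in da.
Qed.

Lemma st_star : is_star st.
Proof.
exists sc => x y; rewrite /st; split.
- case/orP => /andP[/eqP -> /eqP ne]; auto.
- by case=> [[-> /eqP ne]|[-> /eqP ne]]; rewrite eqxx ne ?orbT.
Qed.

Lemma st_maxdeg : 0 < k -> max_degree st = k.
Proof.
move=> k0.
have dc : degree st sc = k.
  have e : [set y | st sc y] = [set~ sc].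
    by apply/setP => y; rewrite !inE /st eqxx /= andbF orbF.
  by rewrite /degree e cardsC1 card_ord.
have dl : forall x, x != sc -> degree st x = 1.
  move=> x ne; have e : [set y | st x y] = [set sc].
    by apply/setP => y; rewrite !inE /st (negbTE ne) /= andbT.
  by rewrite /degree e cards1.
apply/anti_leq/andP; split.
  apply/bigmax_leqP => x _; case: (eqVneq x sc) => [->|ne]; first by rewrite dc.
  by rewrite dl.
by rewrite -{1}dc; apply: leq_bigmax.
Qed.
End Star.


Section Main.
Variables (k : nat) (V : {fset nat}) (E : rel nat) (cs : seq {fset nat}).
Hypothesis inv : Inv V E.
Hypothesis ucs : uniq cs.
Hypothesis scs : size cs = k.
Hypothesis ccs : forall C, is_clique V E C <-> C \in cs.

Definition idx (v : nat) := [seq i <- iota 0 k | v \in nth fset0 cs i].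

Definition Pv (v : nat) : sT k * seq (sT k) :=
  match idx v with
  | [::] => (sc k, [::])
  | [:: i] => (leaf k i, [:: sc k])
  | i :: j :: _ => (leaf k i, [:: sc k; leaf k j])
  end.

Lemma mem_idx v i : (i \in idx v) = (i < k) && (v \in nth fset0 cs i).
Proof. by rewrite mem_filter mem_iota add0n andbC. Qed.

Lemma uniq_idx v : uniq (idx v).
Proof. exact/filter_uniq/iota_uniq. Qed.

Lemma clique_nth i : i < k -> is_clique V E (nth fset0 cs i).
Proof. by move=> hi; apply/ccs/mem_nth; rewrite scs. Qed.

Lemma clique_idx K : is_clique V E K -> index K cs < k /\ nth fset0 cs (index K cs) = K.
Proof.
move/ccs => Kc; split; first by rewrite -scs index_mem.
exact: nth_index.
Qed.

Lemma complete_pair u v : u \in V -> v \in V -> (u != v -> E u v) -> complete_set V E [fset u; v].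
Proof.
case: inv => [_ [sy _]] uV vV e; split.
  by move=> x; rewrite !inE => /orP[/eqP->|/eqP->].
move=> x y; rewrite !inE => /orP[/eqP->|/eqP->] /orP[/eqP->|/eqP->] ne;
  first [by rewrite eqxx in ne | by apply: e | by apply: sy => //; apply: e; rewrite eq_sym].
Qed.

Lemma idx_nonempty v : v \in V -> exists i, i \in idx v.
Proof.
move=> vV; have cp : complete_set V E [fset v; v].
  by apply: complete_pair => // h; rewrite eqxx in h.
have [K [cK sK]] := extend_clique cp.
have [h1 h2] := clique_idx cK.
exists (index K cs); rewrite mem_idx h1 h2 /=; by apply: sK; rewrite !inE eqxx.
Qed.

Lemma size_idx v : v \in V -> size (idx v) <= 2.
Proof.
move=> vV; case: inv => [_ [sy nbs]]; have [A [B nb]] := nbs v vV.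
rewrite -(size_map (nth fset0 cs)).
have -> : 2 = size [:: v |` A; v |` B] by [].
apply: uniq_leq_size.
  rewrite map_inj_in_uniq ?uniq_idx // => i j; rewrite !mem_idx => /andP[hi _] /andP[hj _].
  by move/eqP; rewrite nth_uniq ?scs // => /eqP.
move=> K /mapP [i]; rewrite mem_idx => /andP[hi vK] ->.
by case: (clique_split sy nb (clique_nth hi) vK) => ->; rewrite !inE eqxx ?orbT.
Qed.

Lemma idx_lt v i : i \in idx v -> i < k.
Proof. by rewrite mem_idx => /andP[]. Qed.

Lemma pe_sym (T : finType) (P : T * seq T) a b : path_edge P a b = path_edge P b a.
Proof. by rewrite /path_edge orbC. Qed.

Lemma PE v x : v \in V -> path_edge (Pv v) (sc k) x = (x \in map (leaf k) (idx v)).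
Proof.
move=> vV; have s2 := size_idx vV; have [i0 i0i] := idx_nonempty vV.
have lt := @idx_lt v.
have cl : forall i, i < k -> (sc k == leaf k i) = false by move=> i hi; rewrite eq_sym leaf_ne.
rewrite /Pv; move: s2 i0i lt; case: (idx v) => [|i [|j [|l r]]] //= _ _ lt.
- by rewrite /path_edge /= !inE !xpair_eqE eqxx cl ?lt ?inE ?eqxx // andbT.
- have li : i < k by apply: lt; rewrite inE eqxx.
  have lj : j < k by apply: lt; rewrite !inE eqxx orbT.
  rewrite /path_edge /= !inE !xpair_eqE eqxx (cl _ li) (cl _ lj) /=.
  by rewrite andbT andbF orbF orbC.
Qed.

Lemma Pv_sub v : v \in V -> is_subpath (@st k) (Pv v).
Proof.
move=> vV; have s2 := size_idx vV; have [i0 i0i] := idx_nonempty vV.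
have lt := @idx_lt v; have u := uniq_idx v.
rewrite /Pv /is_subpath; move: s2 i0i lt u; case: (idx v) => [|i [|j [|l r]]] //= _ _ lt u.
- have li : i < k by apply: lt; rewrite inE eqxx.
  have [h1 h2] := st_leaf li.
  by rewrite h2 !inE leaf_ne.
- have li : i < k by apply: lt; rewrite inE eqxx.
  have lj : j < k by apply: lt; rewrite !inE eqxx orbT.
  have [h1 h2] := st_leaf li; have [h3 h4] := st_leaf lj.
  rewrite h2 h3 !inE; move: (leaf_ne li) (leaf_ne lj) => n1 n2.
  rewrite n1 (eq_sym (sc k)) n2 /=; split=> //.
  rewrite andbT; apply/eqP => /(leaf_inj li lj) e.
  by move: u; rewrite e !inE eqxx.
Qed.

Lemma SH u v : u \in V -> v \in V -> edges_meet (@st k) (Pv u) (Pv v) ->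
  exists i, i \in idx u /\ i \in idx v.
Proof.
move=> uV vV [a [b [tab [pu pv]]]].
have [x [hu hv]] : exists x, path_edge (Pv u) (sc k) x /\ path_edge (Pv v) (sc k) x.
  case: (st_tc tab) => e.
    by exists b; rewrite -e.
  by exists a; rewrite !(pe_sym _ (sc k)) -e.
move: hu hv; rewrite !PE // => /mapP[i iu ->] /mapP[j jv e].
exists i; split=> //.
by rewrite (leaf_inj (idx_lt iu) (idx_lt jv) e).
Qed.

Lemma adj_meet u v : u \in V -> v \in V -> u != v ->
  (E u v <-> edges_meet (@st k) (Pv u) (Pv v)).
Proof.
move=> uV vV ne; split.
- move=> e; have cp := complete_pair uV vV (fun _ => e).
  have [K [cK sK]] := extend_clique cp.
  have [h1 h2] := clique_idx cK.
  exists (sc k), (leaf k (index K cs)); split; first by case: (st_leaf h1).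
  rewrite !PE //; split; apply/map_f; rewrite mem_idx h1 h2 /=; apply: sK;
    by rewrite !inE eqxx ?orbT.
- case/SH => // i; rewrite !mem_idx => -[/andP[hi ui] /andP[_ vi]].
  by case: (clique_nth hi) => [[_ cc] _]; apply: cc.
Qed.

Lemma main_rep : helly_h22_rep k V E (@st k) Pv.
Proof.
have k0 : 0 < k.
  case: inv => [[v0 v0V] _]; have [i ii] := idx_nonempty v0V.
  by have := idx_lt ii; lia.
split; last split.
- split; first exact: st_tree.
  split; first exact: Pv_sub.
  exact: adj_meet.
- exact: st_maxdeg.
- move=> S SV _ pw.
  have cS : complete_set V E S.
    split=> // x y xS yS ne; apply/(adj_meet (SV _ xS) (SV _ yS) ne); exact: pw.
  have [K [cK sK]] := extend_clique cS.
  have [h1 h2] := clique_idx cK.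
  exists (sc k), (leaf k (index K cs)); split; first by case: (st_leaf h1).
  move=> v vS; rewrite PE ?SV //; apply/map_f; rewrite mem_idx h1 h2 /=.
  exact: sK.
Qed.
End Main.

Theorem lemma4 (k : nat) (V : {fset nat}) (E : rel nat) :
  kgate k V E ->
  in_helly_h22 k V E /\
  exists (T : finType) (t : rel T) (P : nat -> T * seq T),
    helly_h22_rep k V E t P /\ is_star t.
Proof.
case=> /gate_inv inv [cs [ucs [scs ccs]]].
have R := main_rep inv ucs scs ccs.
split; first by exists (sT k), (@st k), (Pv k cs).
exists (sT k), (@st k), (Pv k cs); split=> //; exact: st_star.
Qed.
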